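(* Let $a_1,\ldots,a_k$ be positive integers, $A=\sum_{j=1}^k a_j$, $n=k+3$, and $v=[4A+2;\,8a_1,\ldots,8a_k,\,1,\,1,\,1]$ (players $1,\ldots,n$). Let $v_{\&\{n-1,n\}}$ be the game in which players $n-1$ and $n$ merge into one player $\&\{n-1,n\}$ of weight $2$. Then $\phi_{\&\{n-1,n\}}(v_{\&\{n-1,n\}})>\phi_{n-1}(v)+\phi_n(v)$ if and only if there is a set $P\subseteq\{1,\ldots,k\}$ with $\sum_{j\in P}a_j=\sum_{j\notin P}a_j$.
   Context: A weighted voting game $[q;w_1,\ldots,w_n]$ has players $1,\ldots,n$ with nonnegative weights and quota $q$, $0<q\le\sum_jw_j$; $v(S)=1$ iff $\sum_{j\in S}w_j\ge q$, else $0$. The Shapley–Shubik index of player $j$ in a game with player set $M$, $|M|=m$, is $\phi_j=\frac{1}{m!}\sum_{X\subseteq M,\,j\in X}(|X|-1)!\,(m-|X|)!\,(v(X)-v(X\setminus\{j\}))$. Merging a set $T$ of players yields the WVG with the same quota in which the players of $T$ are replaced by a single player $\&T$ of weight $\sum_{j\in T}w_j$. *)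

(* Defs.v *)
From HB Require Import structures.
From mathcomp Require Import all_boot all_order all_algebra.
Set Implicit Arguments. Unset Strict Implicit. Unset Printing Implicit Defensive.
Import Order.TTheory GRing.Theory Num.Theory.

Definition wvg (I : finType) (q : nat) (w : I -> nat) (S : {set I}) : bool :=
  (q <= \sum_(j in S) w j)%N.

Definition ssindex (I : finType) (q : nat) (w : I -> nat) (j : I) : rat :=
  (\sum_(X : {set I} | j \in X)
     (((#|X|.-1)`! * (#|I| - #|X|)`!)%:R / (#|I|`!)%:R) *
     ((wvg q w X)%:R - (wvg q w (X :\ j))%:R))%R.

(* Player set of the merged game: the players outside T, plus one new
   player &T (represented by None). *)
Definition merged_players (I : finType) (T : {set I}) : finType :=
  option {j : I | j \notin T}.

Definition merged_weight (I : finType) (T : {set I}) (w : I -> nat)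
  (p : merged_players T) : nat :=
  match p with
  | None => \sum_(j in T) w j
  | Some j => w (val j)
  end.

(* The game v of the theorem: players 0..k-1 have weight 8 a_j,
   players k, k+1, k+2 (i.e. n-2, n-1, n in 1-based numbering) weight 1. *)
Definition thm_weight (k : nat) (a : 'I_k -> nat) (i : 'I_k.+3) : nat :=
  match (insub (val i) : option 'I_k) with
  | Some j => 8 * a j
  | None => 1
  end.

Definition thm_quota (k : nat) (a : 'I_k -> nat) : nat :=
  4 * (\sum_(j < k) a j) + 2.

(* Main.v *)
Require Import Defs.
From HB Require Import structures.
From mathcomp Require Import all_boot all_order all_algebra.
Import Order.TTheory GRing.Theory Num.Theory.
From Stdlib Require Import Lia Arith.
Ltac slia := unfold addn, muln, subn, addn_rec, muln_rec, subn_rec in *; lia.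
Set Implicit Arguments. Unset Strict Implicit. Unset Printing Implicit Defensive.
Local Open Scope ring_scope.

Lemma decomp (I J : finType) (g : J -> I) (ginj : injective g) (F : {set I} -> rat) :
 \sum_(X : {set I}) F X =
 \sum_(S : {set J}) \sum_(U : {set I} | U \subset ~: (g @: setT)) F (g @: S :|: U).
Proof.
rewrite (partition_big (fun X : {set I} => g @^-1: X) xpredT) //=.
apply: eq_bigr => S _.
rewrite (reindex_onto (fun U => g @: S :|: U) (fun X => X :&: ~: (g @: setT))) /=.
  apply: eq_bigl => U; apply/idP/idP.
    by move=> /andP[_ /eqP <-]; apply: subsetIr.
  move=> HU; apply/andP; split; apply/eqP/setP => i; rewrite !inE.
    rewrite mem_imset //; case: (i \in S) => //=.
    apply/negP => Hi; move/subsetP: HU => /(_ _ Hi); rewrite inE imset_f //.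
  case Hi: (i \in U).
    by move/subsetP: HU => /(_ _ Hi); rewrite inE => ->; rewrite orbT.
  rewrite orbF; apply/negP => /andP [/imsetP [j _ E]].
  by rewrite E imset_f.
move=> X /eqP <-; apply/setP => i; rewrite !inE.
case: (boolP (i \in g @: setT)) => [/imsetP [j _ ->]|Hi] /=.
  by rewrite mem_imset // inE andbF orbF.
rewrite andbT; case: (boolP (i \in X)) => _; rewrite ?orbT ?orbF //.
by apply/negP => /imsetP [j Hj E]; move: Hi; rewrite E imset_f.
Qed.

Lemma sum_two (T : finType) (P : pred T) (F : T -> rat) u1 u2 :
  u1 != u2 -> P u1 -> P u2 ->
  (forall u, P u -> u != u1 -> u != u2 -> F u = 0) ->
  \sum_(u | P u) F u = F u1 + F u2.
Proof.
move=> n12 P1 P2 H; rewrite (bigD1 u1) //= (bigD1 u2) /=; last by rewrite P2 eq_sym.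
by rewrite big1 ?addr0 // => u /andP [/andP [Pu n1] n2]; apply: H.
Qed.

Lemma disj_split (I J : finType) (g : J -> I) (S : {set J}) (U : {set I}) :
  U \subset ~: (g @: setT) -> [disjoint g @: S & U].
Proof.
move=> HU; rewrite disjoint_sym disjoints_subset; apply: (subset_trans HU).
by rewrite setCS; apply: imsetS; apply: subsetT.
Qed.

Lemma card_split (I J : finType) (g : J -> I) (ginj : injective g) (S : {set J}) (U : {set I}) :
  U \subset ~: (g @: setT) -> #|g @: S :|: U| = (#|S| + #|U|)%N.
Proof.
move=> HU; rewrite cardsU card_imset //.
suff -> : g @: S :&: U = set0 by rewrite cards0 subn0.
by apply/disjoint_setI0/disj_split.
Qed.

Lemma wsum_split (I J : finType) (g : J -> I) (ginj : injective g)
  (w : I -> nat) (a : J -> nat) (hw : forall j, w (g j) = (8 * a j)%N) (S : {set J}) (U : {set I}) :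
  U \subset ~: (g @: setT) ->
  (\sum_(i in g @: S :|: U) w i = 8 * \sum_(j in S) a j + \sum_(i in U) w i)%N.
Proof.
move=> HU; rewrite (eq_bigl [predU (g @: S) & U]); last by move=> i; rewrite !inE.
rewrite bigU ?disj_split // big_imset /=; last by move=> x y _ _; apply: ginj.
by rewrite big_distrr /=; congr (_ + _)%N; apply: eq_bigr => j _.
Qed.

Definition cf (N m : nat) : rat := ((m.-1)`! * (N - m)`!)%:R / (N`!)%:R.

Definition cond (q t wp : nat) : bool := (t < q <= t + wp)%N.

Lemma ssindex_alt (I : finType) q (w : I -> nat) p :
  ssindex q w p = \sum_(X : {set I})
    (if p \in X then cf #|I| #|X| * (cond q (\sum_(i in X :\ p) w i) (w p))%:R else 0).
Proof.
rewrite /ssindex big_mkcond; apply: eq_bigr => X _; case: ifP => // pX.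
congr (_ * _); rewrite /wvg /cond (big_setD1 p pX) /=.
set t := (\sum_(i in X :\ p) w i)%N.
case: (leqP q t) => H.
  by rewrite (leq_trans H (leq_addl _ _)) subrr.
by rewrite addnC subr0.
Qed.

Lemma ssindex_decomp (I J : finType) (g : J -> I) (ginj : injective g) q
  (w : I -> nat) (a : J -> nat) (hw : forall j, w (g j) = (8 * a j)%N) p :
  p \in ~: (g @: setT) ->
  ssindex q w p = \sum_(S : {set J}) \sum_(U : {set I} | U \subset ~: (g @: setT))
   (if p \in U then cf #|I| (#|S| + #|U|)%N *
      (cond q (8 * \sum_(j in S) a j + \sum_(i in U :\ p) w i) (w p))%:R else 0).
Proof.
move=> pR; rewrite ssindex_alt (decomp ginj).
apply: eq_bigr => S _; apply: eq_bigr => U HU.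
have pS : p \notin g @: S.
  apply/negP => /imsetP [j _ E]; move: pR; rewrite inE E imset_f //.
rewrite inE (negbTE pS) /=; case: ifP => // pU.
rewrite card_split //.
have -> : (g @: S :|: U) :\ p = g @: S :|: (U :\ p).
  apply/setP => i; rewrite !inE; case: eqP => // ->; rewrite (negbTE pS) //.
rewrite (wsum_split ginj hw) //; apply: subset_trans HU; apply: subsetDl.
Qed.

Lemma arith1 A s u : (1 <= u <= 3)%N -> cond (4*A+2)%N (8*s + (u-1))%N 1 -> ((u == 2) && (2*s == A))%N.
Proof. rewrite /cond => /andP[/ssrnat.leP h1 /ssrnat.leP h2] /andP[/ssrnat.ltP h3 /ssrnat.leP h4]; apply/andP; split; apply/eqP; slia. Qed.

Lemma arith1' A s : (2*s == A)%N -> cond (4*A+2)%N (8*s + 1)%N 1.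
Proof. rewrite /cond => /eqP h; apply/andP; split; [apply/ssrnat.ltP|apply/ssrnat.leP]; slia. Qed.

Lemma arith2 A s t : (t <= 1)%N -> cond (4*A+2)%N (8*s + t)%N 2 = (2*s == A)%N.
Proof.
rewrite /cond => /ssrnat.leP h; apply/idP/idP.
  by move=> /andP[/ssrnat.ltP h3 /ssrnat.leP h4]; apply/eqP; slia.
by move=> /eqP h3; apply/andP; split; [apply/ssrnat.ltP|apply/ssrnat.leP]; slia.
Qed.

Lemma inner_orig (I : finType) (R : {set I}) (w : I -> nat)
  (hw1 : forall i, i \in R -> w i = 1%N) p y1 y2 (HR : R = [set p; y1; y2])
  (d1 : p != y1) (d2 : p != y2) (d3 : y1 != y2) N (A s c : nat) :
  \sum_(U : {set I} | U \subset R)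
     (if p \in U then cf N (c + #|U|)%N *
        (cond (4*A+2)%N (8*s + \sum_(i in U :\ p) w i)%N (w p))%:R else 0)
  = if (2*s == A)%N then cf N (c+2)%N + cf N (c+2)%N else 0.
Proof.
have pR : p \in R by rewrite HR !inE eqxx.
have wp : w p = 1%N by apply: hw1.
have Wu : forall U : {set I}, U \subset R -> p \in U -> (\sum_(i in U :\ p) w i = #|U| - 1)%N.
  move=> U HU pU; rewrite (cardsD1 p U) pU add1n subSS subn0 -sum1_card.
  apply: eq_bigr => i; rewrite !inE => /andP [_ iU]; apply: hw1.
  exact: (subsetP HU).
have cU : forall U : {set I}, U \subset R -> (#|U| <= 3)%N.
  move=> U HU; apply: (leq_trans (subset_leq_card HU)).
  rewrite HR; apply: leq_trans (leq_card_setU _ _).1 _; rewrite cards1 addn1 ltnS.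
  by apply: leq_trans (leq_card_setU _ _).1 _; rewrite !cards1.
have key : forall U : {set I}, U \subset R -> p \in U ->
    cond (4*A+2)%N (8*s + \sum_(i in U :\ p) w i)%N (w p) -> (#|U| == 2) && (2*s == A)%N.
  move=> U HU pU; rewrite Wu // wp; apply: arith1.
  by rewrite (cU U HU) andbT card_gt0; apply/set0Pn; exists p.
have shape : forall U : {set I}, U \subset R -> p \in U -> #|U| = 2 ->
    U = [set p; y1] \/ U = [set p; y2].
  move=> U HU pU cU2.
  have : #|U :\ p| == 1 by move: cU2; rewrite (cardsD1 p U) pU add1n => -[->].
  move=> /cards1P [y Ey].
  have yU : y \in U :\ p by rewrite Ey set11.
  move: (yU); rewrite !inE => /andP [yp /(subsetP HU)].
  rewrite HR !inE (negbTE yp) /= => /orP [] /eqP Ey';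
    [left|right]; by rewrite -(setD1K pU) Ey Ey'.
case E: (2*s == A)%N.
  have S1 : [set p; y1] \subset R by rewrite HR; apply/subsetP => i; rewrite !inE; case/orP => ->; rewrite ?orbT.
  have S2 : [set p; y2] \subset R by rewrite HR; apply/subsetP => i; rewrite !inE; case/orP => ->; rewrite ?orbT.
  have F2 : forall y, y != p -> [set p; y] \subset R ->
      (if p \in [set p; y] then cf N (c + #|[set p; y]|)%N *
        (cond (4*A+2)%N (8*s + \sum_(i in [set p; y] :\ p) w i)%N (w p))%:R else 0) = cf N (c+2)%N.
    move=> y yp Sy; rewrite !inE eqxx /= Wu ?inE ?eqxx // cards2 eq_sym yp /=.
    by rewrite wp arith1' // mulr1.
  rewrite (sum_two (u1 := [set p; y1]) (u2 := [set p; y2])) //.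
  - by rewrite !F2 // eq_sym.
  - apply/negP => /eqP E'; have : y1 \in [set p; y2] by rewrite -E' !inE eqxx orbT.
    by rewrite !inE eq_sym (negbTE d1) (negbTE d3).
  - move=> U HU n1 n2; case: ifP => // pU.
    case C: (cond _ _ _); last by rewrite mulr0.
    move: (key U HU pU C) => /andP [/eqP c2 _].
    by case: (shape U HU pU c2) => EU; [move: n1|move: n2]; rewrite EU eqxx.
apply: big1 => U HU; case: ifP => // pU.
case C: (cond _ _ _); last by rewrite mulr0.
by move: (key U HU pU C); rewrite E andbF.
Qed.

Lemma inner_merged (I : finType) (R : {set I}) (w : I -> nat) p y
  (HR : R = [set p; y]) (d : p != y) (wp : w p = 2%N) (wy : w y = 1%N) N (A s c : nat) :
  \sum_(U : {set I} | U \subset R)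
     (if p \in U then cf N (c + #|U|)%N *
        (cond (4*A+2)%N (8*s + \sum_(i in U :\ p) w i)%N (w p))%:R else 0)
  = if (2*s == A)%N then cf N (c+1)%N + cf N (c+2)%N else 0.
Proof.
have shape : forall U : {set I}, U \subset R -> p \in U ->
    U = [set p] \/ U = [set p; y].
  move=> U HU pU.
  have : U :\ p \subset [set y].
    apply/subsetP => i; rewrite !inE => /andP [ip /(subsetP HU)].
    by rewrite HR !inE (negbTE ip).
  rewrite subset1 => /orP [] /eqP E; rewrite -(setD1K pU) E; [right|left] => //.
  by rewrite setU0.
have e1 : [set p] :\ p = set0 by rewrite setDv.
have e2 : [set p; y] :\ p = [set y] by rewrite setU1K // inE.
have S1 : [set p] \subset R by rewrite HR sub1set !inE eqxx.
have S2 : [set p; y] \subset R by rewrite HR.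
case E: (2*s == A)%N.
  rewrite (sum_two (u1 := [set p]) (u2 := [set p; y])) //.
  - rewrite !inE !eqxx /= e1 e2 big_set0 big_set1 cards1 cards2 d wp wy.
    by rewrite (arith2 _ _ (leq0n 1)) arith2 // E !mulr1.
  - apply/negP => /eqP E'; have : y \in [set p] by rewrite E' !inE eqxx orbT.
    by rewrite inE eq_sym (negbTE d).
  - move=> U HU n1 n2; case: ifP => // pU.
    by case: (shape U HU pU) => EU; [move: n1|move: n2]; rewrite EU eqxx.
apply: big1 => U HU; case: ifP => // pU.
case: (shape U HU pU) => ->.
  by rewrite e1 big_set0 wp (arith2 _ _ (leq0n 1)) E mulr0.
by rewrite e2 big_set1 wp wy arith2 // E mulr0.
Qed.
Lemma scale_frac (c x y : nat) : (0 < c)%N -> x%:R / y%:R = (c * x)%:R / (c * y)%:R :> rat.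
Proof.
move=> hc; rewrite !natrM -mulf_div divff ?mul1r // pnatr_eq0 -lt0n //.
Qed.

Lemma term_ineq k m : (m <= k)%N ->
  cf k.+3 (m+2) + cf k.+3 (m+2) + (cf k.+3 (m+2) + cf k.+3 (m+2)) <
  cf k.+2 (m+1) + cf k.+2 (m+2).
Proof.
move=> hm; set t := (k - m)%N.
have hk : k = (m + t)%N by rewrite subnKC.
set a := m`!; set b := t`!; set D := (k.+2)`!.
have e1 : cf k.+3 (m+2) = ((m.+1 * t.+1 * a * b)%:R) / ((k.+3 * D)%:R).
  rewrite /cf addn2 /= subSS subSS subSn // !factS; congr (_%:R / _%:R).
  rewrite /a /b /t; unfold muln, muln_rec; ring.
have e2 : cf k.+2 (m+1) = ((t.+1 * a * b)%:R) / (D%:R).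
  rewrite /cf addn1 /= subSS subSn // !factS; congr (_%:R / _%:R).
  rewrite /a /b /t; unfold muln, muln_rec; ring.
have e3 : cf k.+2 (m+2) = ((m.+1 * a * b)%:R) / (D%:R).
  rewrite /cf addn2 /= subSS subSS !factS; congr (_%:R / _%:R).
rewrite e1 e2 e3 -!mulrDl -!natrD [X in _ < X](scale_frac (c := k.+3)) //.
rewrite ltr_pM2r ?invr_gt0 ?ltr0n ?muln_gt0 ?fact_gt0 // ltr_nat.
have ab : (0 < a * b)%N by rewrite muln_gt0 !fact_gt0.
have -> : (m.+1 * t.+1 * a * b + m.+1 * t.+1 * a * b + (m.+1 * t.+1 * a * b + m.+1 * t.+1 * a * b) = (4 * (m.+1 * t.+1)) * (a * b))%N.
  unfold muln, muln_rec, addn, addn_rec; ring.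
have -> : (k.+3 * (t.+1 * a * b + m.+1 * a * b) = (k.+3 * (t.+1 + m.+1)) * (a * b))%N.
  unfold muln, muln_rec, addn, addn_rec; ring.
rewrite ltn_pmul2r // hk; apply/ssrnat.ltP; unfold muln, muln_rec, addn, addn_rec.
clear e1 e2 e3 ab hk; clearbody t; destruct (Nat.le_ge_cases m t) as [h|h]; [destruct (Nat.le_exists_sub m t h) as [d [-> _]] | destruct (Nat.le_exists_sub t m h) as [d [-> _]]]; nia.
Qed.

Definition gk k (j : 'I_k) : 'I_k.+3 :=
  widen_ord (leq_trans (leqnSn k) (leq_trans (leqnSn _) (leqnSn _))) j.

Lemma gk_inj k : injective (@gk k).
Proof. by move=> x y /(congr1 val) /= /val_inj. Qed.

Lemma gk_w k (a : 'I_k -> nat) j : thm_weight a (gk j) = (8 * a j)%N.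
Proof.
rewrite /thm_weight; case: insubP => [u _ E|].
  by congr (8 * a _)%N; apply: val_inj; rewrite E.
by rewrite /= ltn_ord.
Qed.

Lemma w_small k (a : 'I_k -> nat) (i : 'I_k.+3) : (k <= i)%N -> thm_weight a i = 1%N.
Proof.
move=> h; rewrite /thm_weight; case: insubP => [u Hu _|//].
by move: Hu; rewrite ltnNge h.
Qed.

Lemma gk_img k (i : 'I_k.+3) : (i \in @gk k @: setT) = (i < k)%N.
Proof.
apply/imsetP/idP => [[j _ ->]|h]; first by rewrite /= ltn_ord.
by exists (Ordinal h) => //; apply: val_inj.
Qed.

Lemma nat3 k m : (m < k.+3)%N -> (k <= m)%N = [|| m == k, m == k + 1 | m == k + 2]%N.
Proof.
move=> h; apply/idP/idP => [h2|].
  have [->|[->|->]] : m = k \/ m = (k + 1)%N \/ m = (k + 2)%N.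
    by move/ssrnat.leP: h2; move/ssrnat.ltP: h; slia.
  - by rewrite eqxx.
  - by rewrite eqxx orbT.
  - by rewrite eqxx !orbT.
by case/or3P => /eqP ->; rewrite ?leq_addr.
Qed.

Lemma eq_inord n (i : 'I_n.+1) m : (m <= n)%N -> (i == inord m) = (val i == m).
Proof.
move=> h; apply/eqP/eqP => [->|<-]; first exact: inordK.
by rewrite inord_val.
Qed.

Lemma Rorig k (i : 'I_k.+3) : (i \in ~: (@gk k @: setT)) =
  [|| i == inord k, i == inord (k + 1) | i == inord (k + 2)].
Proof.
rewrite inE gk_img -leqNgt !eq_inord.
- exact: nat3 (ltn_ord i).
- by rewrite addn2.
- by rewrite addn1 leqW.
- by rewrite leqW ?leqW.
Qed.

Lemma neq_ord n (i j : 'I_n) : (i : nat) != j -> i != j.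
Proof. by apply: contra => /eqP ->. Qed.

Local Close Scope ring_scope.
Unset Implicit Arguments.
Set Strict Implicit.

Theorem mainTheorem11 (k : nat) (a : 'I_k -> nat)
  (apos : forall j, (0 < a j)%N) :
  let q := thm_quota a in
  let w := thm_weight a in
  let p1 : 'I_k.+3 := inord (k + 1) in
  let p2 : 'I_k.+3 := inord (k + 2) in
  let T : {set 'I_k.+3} := [set p1; p2] in
  (ssindex q w p1 + ssindex q w p2 <
     ssindex q (merged_weight w) (None : merged_players T))%R
  <-> exists P : {set 'I_k}, \sum_(j in P) a j = \sum_(j in ~: P) a j.
Proof.
move=> q w p1 p2 T.
pose x0 : 'I_k.+3 := inord k.
have v0 : (x0 : nat) = k by rewrite /x0 inordK // leqW.
have v1 : (p1 : nat) = (k + 1)%N by rewrite /p1 inordK // addn1 ltnS leqW.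
have v2 : (p2 : nat) = (k + 2)%N by rewrite /p2 inordK // addn2.
have d01 : x0 != p1 by apply: neq_ord; rewrite v0 v1; apply/eqP; slia.
have d02 : x0 != p2 by apply: neq_ord; rewrite v0 v2; apply/eqP; slia.
have d12 : p1 != p2 by apply: neq_ord; rewrite v1 v2; apply/eqP; slia.
have d10 : p1 != x0 by rewrite eq_sym.
have d20 : p2 != x0 by rewrite eq_sym.
have d21 : p2 != p1 by rewrite eq_sym.
have RO1 : ~: (@gk k @: setT) = [set p1; x0; p2].
  apply/setP => i; rewrite Rorig !inE -/x0 -/p1 -/p2.
  by case: (i == x0); case: (i == p1); case: (i == p2).
have RO2 : ~: (@gk k @: setT) = [set p2; x0; p1].
  apply/setP => i; rewrite Rorig !inE -/x0 -/p1 -/p2.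
  by case: (i == x0); case: (i == p1); case: (i == p2).
have hw1 : forall i, i \in ~: (@gk k @: setT) -> w i = 1.
  by move=> i; rewrite inE gk_img -leqNgt; apply: w_small.
have E1 : ssindex q w p1 = (\sum_(S : {set 'I_k})
   (if (2 * \sum_(j in S) a j == \sum_(j < k) a j)%N then
      cf k.+3 (#|S| + 2)%N + cf k.+3 (#|S| + 2)%N else 0))%R.
  rewrite (ssindex_decomp (@gk_inj k) q (gk_w a)); last by rewrite RO1 !inE eqxx.
  apply: eq_bigr => S _; rewrite card_ord.
  exact: (inner_orig hw1 RO1 d10 d12 d02).
have E2 : ssindex q w p2 = (\sum_(S : {set 'I_k})
   (if (2 * \sum_(j in S) a j == \sum_(j < k) a j)%N then
      cf k.+3 (#|S| + 2)%N + cf k.+3 (#|S| + 2)%N else 0))%R.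
  rewrite (ssindex_decomp (@gk_inj k) q (gk_w a)); last by rewrite RO2 !inE eqxx.
  apply: eq_bigr => S _; rewrite card_ord.
  exact: (inner_orig hw1 RO2 d20 d21 d01).
have gT : forall j, gk j \notin T.
  move=> j; have hj : (gk j < k)%N := ltn_ord j.
  rewrite /T !inE; apply/norP; split; apply: neq_ord; rewrite ?v1 ?v2;
    apply/eqP => E; move/ssrnat.ltP: hj; rewrite E; slia.
have x0T : x0 \notin T.
  by rewrite /T !inE; apply/norP; split.
pose x0' : {j : 'I_k.+3 | j \notin T} := exist _ x0 x0T.
pose g' := fun j : 'I_k => (Some (exist (fun x : 'I_k.+3 => x \notin T) (gk j) (gT j)) : merged_players T).
have g'inj : injective g'.
  move=> x y /(congr1 (fun o : merged_players T => if o is Some e then val (val e) else 0%N)).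
  by move=> /= /val_inj.
have hw' : forall j, merged_weight w (g' j) = 8 * a j by move=> j; exact: gk_w.
have eqS : forall u v : {j : 'I_k.+3 | j \notin T}, (Some u == Some v) = (val u == val v).
  by move=> u v; rewrite val_eqE; apply/eqP/eqP => [[->]|->].
have R' : ~: (g' @: setT) = [set None; Some x0'].
  apply/setP => -[[e0 He]|]; rewrite !inE; last first.
    by apply/negP => /imsetP [j _ E].
  have img : (Some (exist _ e0 He) \in g' @: setT) = (e0 < k)%N.
    apply/imsetP/idP => [[j _ E]|h].
      move: E => /(congr1 (fun o : merged_players T => if o is Some e then val (val e) else 0%N)) /= ->.
      exact: ltn_ord.
    by exists (Ordinal h) => //; congr Some; apply: val_inj; apply: val_inj.
  rewrite img eqS /= -leqNgt nat3 //.
  have : e0 \notin T := He.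
  rewrite /T !inE => /norP [n1 n2].
  have e1' : ((e0:nat) == (k+1)%N) = false by rewrite -v1; exact: negbTE n1.
  have e2' : ((e0:nat) == (k+2)%N) = false by rewrite -v2; exact: negbTE n2.
  rewrite e1' e2' !orbF -[X in _ = X]/((e0:nat) == (x0:nat)) v0 //.
have dN : None != Some x0' by [].
have wN : @merged_weight _ T w None = 2.
  change (\sum_(j in [set p1; p2]) w j = 2); rewrite big_setU1 ?big_set1 ?inE //=.
  by rewrite /w !w_small ?v1 ?v2 ?leq_addr.
have wx : merged_weight w (Some x0') = 1 by rewrite /= /w w_small ?v0.
have cardM : #|merged_players T| = k.+2.
  rewrite /merged_players card_option card_sig.
  have -> : #|[pred x : 'I_k.+3 | x \notin T]| = #|~: T| by apply: eq_card => x; rewrite !inE.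
  have cT : #|T| = 2 by change (#|[set p1; p2]| = 2); rewrite cards2 d12.
  have := cardsC T; rewrite card_ord cT.
  by move=> H; congr S; apply: (@addnI 2); exact: H.
have E3 : ssindex q (merged_weight w) (None : merged_players T) = (\sum_(S : {set 'I_k})
   (if (2 * \sum_(j in S) a j == \sum_(j < k) a j)%N then
      cf k.+2 (#|S| + 1)%N + cf k.+2 (#|S| + 2)%N else 0))%R.
  rewrite (ssindex_decomp g'inj q hw'); last by rewrite R' !inE eqxx.
  apply: eq_bigr => S _; rewrite cardM.
  exact: (inner_merged R' dN wN wx).
have cardS : forall S : {set 'I_k}, #|S| <= k.
  by move=> S; apply: leq_trans (max_card _) _; rewrite card_ord.
rewrite E1 E2 E3; split.
  move=> H.
  case: (boolP [exists S : {set 'I_k}, (2 * \sum_(j in S) a j == \sum_(j < k) a j)]) => [/existsP [S hS]|nE].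
    exists S; move/eqP: hS; rewrite [\sum_(j < k) a j](bigID (mem S)) /=.
    have -> : \sum_(j in ~: S) a j = \sum_(j < k | j \notin S) a j.
      by apply: eq_bigl => j; rewrite inE.
    by rewrite mul2n -addnn => /eqP; rewrite eqn_add2l => /eqP.
  move/existsPn: nE => nE.
  have Z : forall F : {set 'I_k} -> rat, (\sum_(S : {set 'I_k})
      (if (2 * \sum_(j in S) a j == \sum_(j < k) a j)%N then F S else 0) = 0)%R.
    by move=> F; apply: big1 => S _; rewrite (negbTE (nE S)).
  by rewrite !Z addr0 ltxx in H.
move=> [P hP].
have hP2 : (2 * \sum_(j in P) a j == \sum_(j < k) a j).
  rewrite [\sum_(j < k) a j](bigID (mem P)) /= mul2n -addnn {2}hP.
  by apply/eqP; congr (_ + _); apply: eq_bigl => j; rewrite inE.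
rewrite -big_split /= (bigD1 P) //= [X in (_ < X)%R](bigD1 P) //= hP2.
apply: ltr_leD; first exact: term_ineq.
apply: ler_sum => S _; case: ifP => _; last by rewrite addr0.
exact/ltW/term_ineq.
Qed.
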